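(* Let $p\colon E\to B$ be an arc-hedgehog covering. Then $p$ is a disk-hedgehog covering if and only if it is a disk-covering.
   Context: All maps are continuous. A Peano space is a connected, locally path-connected space. For a class $\mathcal{P}$ of spaces, $p\colon E\to B$ is a $\mathcal{P}$-covering if for every $e_0\in E$, $X\in\mathcal{P}$, $x_0\in X$ and map $f\colon X\to B$ with $f(x_0)=p(e_0)$ there is a map $g\colon X\to E$ with $p\circ g=f$, $g(x_0)=e_0$, and such lifts are unique. A disk-covering is a $\mathcal{P}$-covering for $\mathcal{P}=\{D^2\}$ ($D^2$ the closed unit 2-disk). A directed wedge is $(Z,z_0)=\bigvee_{s\in S}(Z_s,z_s)$, a wedge of pointed Peano spaces indexed by a directed set $S$, topologized so that $U\subset Z\setminus\{z_0\}$ is open iff each $U\cap Z_s$ is open, and $U\ni z_0$ is an open neighborhood of $z_0$ iff each $U\cap Z_s$ is open and there is $t\in S$ with $Z_s\subset U$ for all $s>t$. An arc-hedgehog (resp. disk-hedgehog) is a directed wedge with each $(Z_s,z_s)$ homeomorphic to $([0,1],0)$ (resp. each $Z_s$ homeomorphic to $D^2$). An arc-hedgehog (resp. disk-hedgehog) covering is a $\mathcal{P}$-covering for $\mathcal{P}$ the class of all arc-hedgehogs (resp. disk-hedgehogs). *)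

(* Defs.v *)
From HB Require Import structures.
From mathcomp Require Import all_boot all_order all_algebra.
From mathcomp Require Import all_classical all_reals.
From mathcomp Require Import topology_structure subtype_topology product_topology num_topology.
From mathcomp Require Import Rstruct Rstruct_topology.
From Stdlib Require Import Rdefinitions.

Set Implicit Arguments.
Unset Strict Implicit.
Unset Printing Implicit Defensive.

Import Order.TTheory GRing.Theory Num.Theory.
Local Open Scope classical_set_scope.
Local Open Scope ring_scope.

Record directedSet := DirectedSet {
  dcarrier :> Type;
  dle : dcarrier -> dcarrier -> Prop;
  dle_refl : forall s, dle s s;
  dle_trans : forall r s t, dle r s -> dle s t -> dle r t;
  dle_directed : forall s t, exists u, dle s u /\ dle t u;
  dinhabited : inhabited dcarrier
}.

Definition dgt (S : directedSet) (s t : S) : Prop := dle t s /\ ~ dle s t.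

(** The directed wedge of pointed spaces (Z_s, z_s), s in S.
    Carrier: [None] is the wedge point z0; [Some (s; x)] is a point
    x of Z_s different from z_s. *)
Section Wedge.
Variables (S : directedSet) (Z : S -> topologicalType) (z : forall s, Z s).

Definition wedge := option {s : S & {x : Z s | x <> z s}}.

HB.instance Definition _ := gen_eqMixin wedge.
HB.instance Definition _ := gen_choiceMixin wedge.

Definition wedge_incl (s : S) (x : Z s) : wedge :=
  match pselect (x = z s) with
  | left _ => None
  | right h => Some (existT _ s (exist _ x h))
  end.

Definition wedge_open (U : set wedge) : Prop :=
  (forall s, open (@wedge_incl s @^-1` U)) /\
  (U None -> exists t : S, forall s, dgt s t -> forall x : Z s, U (@wedge_incl s x)).

Lemma wedge_openT : wedge_open setT.
Proof. by split => [s|_]; [rewrite preimage_setT; exact: openT|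
  case: (dinhabited S) => t; exists t]. Qed.

Lemma wedge_openI : setI_closed wedge_open.
Proof.
move=> A B [oA cA] [oB cB]; split => [s|[/cA [t1 H1] /cB [t2 H2]]].
  by rewrite preimage_setI; apply: openI.
have [u [u1 u2]] := dle_directed t1 t2.
exists u => s [us nsu] x; split.
- apply: H1 => //; split; first exact: dle_trans u1 us.
  by move=> st1; apply: nsu; apply: dle_trans st1 u1.
- apply: H2 => //; split; first exact: dle_trans u2 us.
  by move=> st2; apply: nsu; apply: dle_trans st2 u2.
Qed.

Lemma wedge_open_bigU (I : Type) (f : I -> set wedge) :
  (forall i, wedge_open (f i)) -> wedge_open (\bigcup_i f i).
Proof.
move=> oF; split => [s|[i _ /(proj2 (oF i)) [t Ht]]].
  by rewrite preimage_bigcup; apply: bigcup_open => i _; exact: (proj1 (oF i)).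
by exists t => s st x; exists i => //; exact: Ht.
Qed.

HB.instance Definition _ :=
  isOpenTopological.Build wedge wedge_openT wedge_openI wedge_open_bigU.

End Wedge.

Definition unit_interval : set R := [set x | 0 <= x <= 1].
Definition unit_disk : set (R * R) := [set v | v.1 ^+ 2 + v.2 ^+ 2 <= 1].

Definition homeomorphism (X Y : topologicalType) (f : X -> Y) : Prop :=
  exists g : Y -> X,
    [/\ continuous f, continuous g, cancel f g & cancel g f].

Definition homeomorphic (X Y : topologicalType) : Prop :=
  exists f : X -> Y, homeomorphism f.

Definition pointed_homeomorphic_to_arc (X : topologicalType) (x : X) : Prop :=
  exists f : X -> set_type unit_interval,
    homeomorphism f /\ set_val (f x) = 0.

Definition unique_lifting (E B : topologicalType) (p : E -> B)
    (X : topologicalType) : Prop :=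
  forall (e0 : E) (x0 : X) (f : X -> B),
    continuous f -> f x0 = p e0 ->
    (exists g : X -> E, [/\ continuous g, (forall x, p (g x) = f x) & g x0 = e0])
    /\ (forall g1 g2 : X -> E, continuous g1 -> continuous g2 ->
          (forall x, p (g1 x) = f x) -> (forall x, p (g2 x) = f x) ->
          g1 x0 = e0 -> g2 x0 = e0 -> g1 = g2).

Definition disk_covering (E B : topologicalType) (p : E -> B) : Prop :=
  unique_lifting p (set_type unit_disk).

Definition arc_hedgehog_covering (E B : topologicalType) (p : E -> B) : Prop :=
  forall (S : directedSet) (Z : S -> topologicalType) (z : forall s, Z s),
    (forall s, pointed_homeomorphic_to_arc (z s)) ->
    unique_lifting p (wedge z).

Definition disk_hedgehog_covering (E B : topologicalType) (p : E -> B) : Prop :=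
  forall (S : directedSet) (Z : S -> topologicalType) (z : forall s, Z s),
    (forall s, homeomorphic (Z s) (set_type unit_disk)) ->
    unique_lifting p (wedge z).

(* Main.v *)
Require Import Defs.
From HB Require Import structures.
From mathcomp Require Import all_boot all_order all_algebra.
From mathcomp Require Import all_classical all_reals topology_structure.
From mathcomp Require Import topology normedtype Rstruct Rstruct_topology.
From mathcomp Require Import lra.
From Stdlib Require Import Rdefinitions.

Set Implicit Arguments.
Unset Strict Implicit.
Unset Printing Implicit Defensive.
Import Order.TTheory GRing.Theory Num.Theory.
Local Open Scope classical_set_scope.
Local Open Scope ring_scope.


Lemma ul_homeo (E B X Y : topologicalType) (p : E -> B) (h : X -> Y) :
  homeomorphism h -> unique_lifting p Y -> unique_lifting p X.
Proof.
case=> k [ch ck hk kh] UL e0 x0 f cf fx0.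
have cfk : continuous (f \o k).
  by move=> y; apply: continuous_comp; [apply: ck|apply: cf].
have fk0 : (f \o k) (h x0) = p e0 by rewrite /= hk.
have [[g [cg pg g0]] uniq] := UL e0 (h x0) (f \o k) cfk fk0.
split.
- exists (g \o h); split => [x|x|//].
  + by apply: continuous_comp; [apply: ch|apply: cg].
  + by rewrite /= pg /= hk.
- move=> g1 g2 c1 c2 p1 p2 e1 e2.
  have E12 : g1 \o k = g2 \o k.
    apply: uniq => [y|y|y|y|/=|/=].
    + by apply: continuous_comp; [apply: ck|apply: c1].
    + by apply: continuous_comp; [apply: ck|apply: c2].
    + by rewrite /= p1.
    + by rewrite /= p2.
    + by rewrite hk.
    + by rewrite hk.
  apply: funext => x; rewrite -[x]hk.
  exact: (congr1 (fun F => F (h x)) E12).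
Qed.

Lemma id_homeo (X : topologicalType) : homeomorphism (@id X).
Proof. by exists id; split => // x; exact: cvg_id. Qed.

Lemma disk_in (a : set_type unit_disk) : (val a).1 ^+ 2 + (val a).2 ^+ 2 <= 1.
Proof. by have := set_mem (valP a). Qed.

Lemma convex_ineq (a1 a2 b1 b2 t : R) :
  a1 ^+ 2 + a2 ^+ 2 <= 1 -> b1 ^+ 2 + b2 ^+ 2 <= 1 -> 0 <= t -> t <= 1 ->
  (a1 + t * (b1 - a1)) ^+ 2 + (a2 + t * (b2 - a2)) ^+ 2 <= 1.
Proof.
move=> ha hb t0 t1.
have h1 : 0 <= t * (1 - t) * ((a1 - b1) ^+ 2 + (a2 - b2) ^+ 2).
  apply: mulr_ge0; [apply: mulr_ge0; lra|].
  by apply: addr_ge0; apply: sqr_ge0.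
nra.
Qed.

Definition unitDS : directedSet :=
  @DirectedSet unit (fun _ _ => True) (fun _ => I) (fun _ _ _ _ _ => I)
    (fun _ _ => ex_intro _ tt (conj I I)) (inhabits tt).

Lemma incl_continuous (S : directedSet) (Z : S -> topologicalType)
  (z : forall s, Z s) (s : S) : continuous (@wedge_incl S Z z s).
Proof. by apply/continuousP => A [oA _]; exact: oA. Qed.

Lemma some_incl (S : directedSet) (Z : S -> topologicalType)
  (z : forall s, Z s) (s : S) (x : Z s) (h : x <> z s) :
  Some (existT _ s (exist _ x h)) = @wedge_incl S Z z s x.
Proof.
rewrite /wedge_incl; case: pselect => [e|h'] //.
by congr (Some (existT _ s _)); congr exist; exact: Prop_irrelevance.
Qed.

Lemma incl_z (S : directedSet) (Z : S -> topologicalType)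
  (z : forall s, Z s) (s : S) : @wedge_incl S Z z s (z s) = None.
Proof. by rewrite /wedge_incl; case: pselect. Qed.

Lemma wedge_cases (S : directedSet) (Z : S -> topologicalType)
  (z : forall s, Z s) (w : wedge z) : w = None \/ exists s x, w = @wedge_incl S Z z s x.
Proof.
case: w => [[s [x h]]|]; last by left.
by right; exists s, x; exact: some_incl.
Qed.

Lemma unit_wedge_homeo (X : topologicalType) (x0 : X) :
  homeomorphism (@wedge_incl unitDS (fun _ => X) (fun _ => x0) tt).
Proof.
pose k (w : wedge (fun _ : unitDS => x0)) : X :=
  match w with None => x0 | Some (existT _ (exist y _)) => y end.
have hk : cancel (@wedge_incl unitDS (fun _ => X) (fun _ => x0) tt) k.
  by move=> y; rewrite /wedge_incl; case: pselect.
exists k; split => //.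
- exact: incl_continuous.
- apply/continuousP => A oA; split => [s|_].
  + case: s; have -> : @wedge_incl unitDS (fun _ => X) (fun _ => x0) tt @^-1` (k @^-1` A) = A.
      by apply: funext => y; rewrite /preimage /= hk.
    exact: oA.
  + by exists tt => s [_ H]; exfalso; exact: H.
- case=> [[[] [y h]]|]; last by rewrite /k incl_z.
  by rewrite /k some_incl.
Qed.

Notation I01 := (classical_sets.set_type unit_interval).
Notation D2 := (classical_sets.set_type unit_disk).

Lemma zero_in : (0 : R) \in unit_interval.
Proof. by apply/mem_set; rewrite /unit_interval /= lexx ler01. Qed.
Lemma one_in : (1 : R) \in unit_interval.
Proof. by apply/mem_set; rewrite /unit_interval /= lexx ler01. Qed.
Definition zero01 : I01 := exist _ 0 zero_in.
Definition one01 : I01 := exist _ 1 one_in.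

Lemma I01_in (t : I01) : 0 <= val t /\ val t <= 1.
Proof. by have /andP[] := set_mem (valP t). Qed.

Definition segv (a b : D2) (t : I01) : R * R :=
  ((val a).1 + val t * ((val b).1 - (val a).1),
   (val a).2 + val t * ((val b).2 - (val a).2)).

Lemma segv_in (a b : D2) (t : I01) : segv a b t \in unit_disk.
Proof.
apply/mem_set; rewrite /unit_disk /segv /=; have [t0 t1] := I01_in t.
exact: convex_ineq (disk_in a) (disk_in b) t0 t1.
Qed.

Definition seg (a b : D2) (t : I01) : D2 := exist _ (segv a b t) (segv_in a b t).

Lemma seg0 a b : seg a b zero01 = a.
Proof.
apply: val_inj; rewrite /= /segv /=.
rewrite !mul0r !addr0.
by case: (val a).
Qed.
Lemma seg1 a b : seg a b one01 = b.
Proof.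
apply: val_inj; rewrite /= /segv /=.
rewrite !mul1r !(addrC (val a).1) !(addrC (val a).2) !subrK.
by case: (val b).
Qed.

Lemma affine_cont0 (c d : R) : continuous (fun x : R^o => d + x * c : R^o).
Proof.
move=> x.
apply: (@cvgD _ R^o _ _ _ (fun _ => d) (fun x : R^o => x * c : R^o)).
  exact: cvg_cst.
apply: (@cvgM _ _ _ _ (fun x : R^o => x) (fun _ => c)).
  exact: cvg_id.
exact: cvg_cst.
Qed.
Lemma affine_cont (c d : R) : continuous (fun x : R => d + x * c).
Proof. exact: affine_cont0. Qed.

Lemma val_continuous (T : topologicalType) (A : set T) :
  continuous (@set_val T A : classical_sets.set_type A -> T).
Proof. exact: initial_continuous. Qed.

Lemma seg_continuous a b : continuous (seg a b).
Proof.
have := @continuous_comp_initial _ I01 _ (@set_val _ unit_disk) (seg a b).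
move=> H; apply: H.
have -> : set_val \o seg a b = segv a b by [].
move=> t; rewrite /segv.
set f1 := fun x : I01 => (val a).1 + val x * ((val b).1 - (val a).1).
set f2 := fun x : I01 => (val a).2 + val x * ((val b).2 - (val a).2).
have h1 : f1 @ t --> f1 t.
  apply: (@continuous_comp _ _ _ set_val (fun x : R => (val a).1 + x * ((val b).1 - (val a).1))).
    exact: val_continuous.
  exact: affine_cont.
have h2 : f2 @ t --> f2 t.
  apply: (@continuous_comp _ _ _ set_val (fun x : R => (val a).2 + x * ((val b).2 - (val a).2))).
    exact: val_continuous.
  exact: affine_cont.
exact: (cvg_pair h1 h2).
Qed.

Lemma hedgehog_exist (E B : topologicalType) (p : E -> B) (S : directedSet)
  (Z : S -> topologicalType) (z : forall s, Z s)
  (UL : forall s, unique_lifting p (Z s))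
  (ULI : unique_lifting p I01)
  (AH : unique_lifting p (@wedge S (fun _ => I01) (fun _ => zero01)))
  (k : forall s, Z s -> D2) (Hk : forall s, homeomorphism (k s))
  (f : wedge z -> B) (cf : continuous f) (es : E) (hes : f None = p es) :
  exists g : wedge z -> E, [/\ continuous g, (forall x, p (g x) = f x) & g None = es].
Proof.
pose kinv s := projT1 (cid (Hk s)).
have Hkinv s : [/\ continuous (k s), continuous (kinv s), cancel (k s) (kinv s)
   & cancel (kinv s) (k s)] := projT2 (cid (Hk s)).
pose fs s := f \o @wedge_incl S Z z s.
have cfs s : continuous (fs s).
  by move=> x; apply: continuous_comp; [apply: incl_continuous|apply: cf].
have fs0 s : fs s (z s) = p es by rewrite /fs /= incl_z.
have Hl s := (UL s es (z s) (fs s) (cfs s) (fs0 s)).1.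
pose ls s := projT1 (cid (Hl s)).
have Hls s : [/\ continuous (ls s), (forall x, p (ls s x) = fs s x) & ls s (z s) = es]
  := projT2 (cid (Hl s)).
pose g (w : wedge z) : E :=
  match w with None => es | Some (existT s (exist x _)) => ls s x end.
have g_incl s x : g (@wedge_incl S Z z s x) = ls s x.
  rewrite /wedge_incl; case: pselect => [->|] //.
  by have [_ _ ->] := Hls s.
have pg : forall w, p (g w) = f w.
  move=> w; case: (wedge_cases w) => [->|[s [x ->]]]; first by rewrite /= hes.
  by rewrite g_incl; have [_ -> _] := Hls s.
exists g; split => //.
apply/continuousP => A oA; split => [s|gA].
  have -> : @wedge_incl S Z z s @^-1` (g @^-1` A) = ls s @^-1` A.
    by apply: funext => x; rewrite /preimage /= g_incl.
  by have [/continuousP cls _ _] := Hls s; apply: cls.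
apply: contrapT => Hno.
have bad : forall t, exists s, dgt s t /\ exists x, ~ A (ls s x).
  move=> t; apply: contrapT => Hn; apply: Hno; exists t => s st x.
  apply: contrapT => nA; apply: Hn; exists s; split => //; exists x.
  by rewrite -g_incl.
pose y s : Z s := match pselect (exists x, ~ A (ls s x)) with
  | left h => projT1 (cid h) | right _ => z s end.
have ybad s : (exists x, ~ A (ls s x)) -> ~ A (ls s (y s)).
  by rewrite /y; case: pselect => // h _; exact: projT2 (cid h).
pose phi s (t : I01) : Z s := kinv s (seg (k s (z s)) (k s (y s)) t).
have cphi s : continuous (phi s).
  move=> t; apply: continuous_comp; first exact: seg_continuous.
  by have [_ ck _ _] := Hkinv s; apply: ck.
have phi0 s : phi s zero01 = z s by rewrite /phi seg0; have [_ _ -> _] := Hkinv s.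
have phi1 s : phi s one01 = y s by rewrite /phi seg1; have [_ _ -> _] := Hkinv s.
pose iA s := @wedge_incl S (fun _ => I01) (fun _ => zero01) s.
pose Phi (w : @wedge S (fun _ => I01) (fun _ => zero01)) : wedge z :=
  match w with None => None | Some (existT s (exist t _)) => @wedge_incl S Z z s (phi s t) end.
have Phi_incl s t : Phi (iA s t) = @wedge_incl S Z z s (phi s t).
  rewrite /iA /wedge_incl; case: pselect => [->|h] //.
  by rewrite /= phi0; case: pselect.
have cPhi : continuous Phi.
  apply/continuousP => V [oV1 oV2]; split => [s|VN].
    have -> : iA s @^-1` (Phi @^-1` V) = phi s @^-1` (@wedge_incl S Z z s @^-1` V).
      by apply: funext => x; rewrite /preimage /= Phi_incl.
    by move: (cphi s) => /continuousP; apply; exact: oV1.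
  have [t Ht] := oV2 VN.
  exists t => s st x; rewrite -/(iA s x) /= Phi_incl; exact: Ht.
have cfPhi : continuous (f \o Phi).
  by move=> w; apply: continuous_comp; [apply: cPhi|apply: cf].
have [[h [ch ph h0]] _] := AH es None (f \o Phi) cfPhi hes.
have : open (h @^-1` A) by move/continuousP: ch; apply.
case=> _ Hw.
have hA : (h @^-1` A) None by rewrite /preimage /= h0.
have [t Ht] := Hw hA.
have [s [st [x nx]]] := bad t.
have nys := ybad s (ex_intro _ x nx).
have cf' : continuous (fs s \o phi s).
  by move=> u; apply: continuous_comp; [apply: cphi|apply: cfs].
have f'0 : (fs s \o phi s) zero01 = p es by rewrite /= phi0.
have E12 : h \o iA s = ls s \o phi s.
  have [cls pls ls0] := Hls s.
  apply: ((ULI es zero01 (fs s \o phi s) cf' f'0).2 (h \o iA s) (ls s \o phi s)).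
  - by move=> u; apply: continuous_comp; [apply: incl_continuous|apply: ch].
  - by move=> u; apply: continuous_comp; [apply: cphi|apply: cls].
  - by move=> u; rewrite /= ph /= Phi_incl.
  - by move=> u; rewrite /= pls.
  - by rewrite /= /iA incl_z.
  - by rewrite /= phi0.
apply: nys; rewrite -phi1.
have HA := Ht s st one01.
have /= <- := congr1 (fun F => F one01) E12.
exact: HA.
Qed.

Lemma hedgehog_unique (E B : topologicalType) (p : E -> B) (S : directedSet)
  (Z : S -> topologicalType) (z : forall s, Z s)
  (UL : forall s, unique_lifting p (Z s))
  (f : wedge z -> B) (cf : continuous f) (g1 g2 : wedge z -> E) :
  continuous g1 -> continuous g2 -> (forall x, p (g1 x) = f x) ->
  (forall x, p (g2 x) = f x) -> forall w, g1 w = g2 w -> g1 = g2.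
Proof.
move=> c1 c2 p1 p2 w e.
have cfs s : continuous (f \o @wedge_incl S Z z s).
  by move=> x; apply: continuous_comp; [apply: incl_continuous|apply: cf].
have key : forall s x, g1 (@wedge_incl S Z z s x) = g2 (@wedge_incl S Z z s x) ->
    forall y, g1 (@wedge_incl S Z z s y) = g2 (@wedge_incl S Z z s y).
  move=> s x exy y.
  have fx : (f \o @wedge_incl S Z z s) x = p (g1 (@wedge_incl S Z z s x)) by rewrite /= p1.
  have E12 := (UL s _ x _ (cfs s) fx).2 (g1 \o @wedge_incl S Z z s) (g2 \o @wedge_incl S Z z s).
  have := E12 _ _ _ _ erefl (esym exy).
  move=> /(_ _ _ _ _) /(congr1 (fun F => F y)) /=; apply.
  - by move=> u; apply: continuous_comp; [apply: incl_continuous|apply: c1].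
  - by move=> u; apply: continuous_comp; [apply: incl_continuous|apply: c2].
  - by move=> u; rewrite /= p1.
  - by move=> u; rewrite /= p2.
have gN : g1 None = g2 None.
  case: (wedge_cases w) e => [->|[s [x ->]]] // exw.
  by rewrite -(incl_z z s); exact: key exw _.
apply: funext => w'; case: (wedge_cases w') => [->|[s [x ->]]] //.
by apply: (key s (z s)); rewrite incl_z.
Qed.

Lemma zeroD_in : ((0 : R), (0 : R)) \in unit_disk.
Proof. by apply/mem_set; rewrite /unit_disk /= expr0n /= addr0 ler01. Qed.
Definition zeroD : D2 := exist _ (0, 0) zeroD_in.

Theorem proposition3p15 (E B : topologicalType) (p : E -> B) :
  continuous p ->
  arc_hedgehog_covering p ->
  (disk_hedgehog_covering p <-> disk_covering p).
Proof.
move=> _ AH.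
have ULI : unique_lifting p I01.
  have := ul_homeo (p := p) (unit_wedge_homeo zero01).
  apply; apply: AH => s.
  by exists id; split; [exact: id_homeo|].
split.
  move=> DH; have := ul_homeo (p := p) (unit_wedge_homeo zeroD).
  apply; apply: DH => s.
  by exists id; exact: id_homeo.
move=> DC S Z z HZ e0 x0 f cf fx0.
have UL s : unique_lifting p (Z s) by have [k hk] := HZ s; exact: ul_homeo hk DC.
have AHS : unique_lifting p (@wedge S (fun _ => I01) (fun _ => zero01)).
  by apply: AH => s; exists id; split; [exact: id_homeo|].
pose k s := projT1 (cid (HZ s)).
have Hk s : homeomorphism (k s) := projT2 (cid (HZ s)).
have ex := @hedgehog_exist E B p S Z z UL ULI AHS k Hk f cf.
split; last first.
  move=> g1 g2 c1 c2 p1 p2 e1 e2.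
  by apply: (hedgehog_unique UL cf c1 c2 p1 p2 (w := x0)); rewrite e1 e2.
case: (wedge_cases x0) fx0 => [->|[s [x ->]]] fx0.
  by have [g [cg pg g0]] := ex e0 fx0; exists g.
have cfs : continuous (f \o @wedge_incl S Z z s).
  by move=> u; apply: continuous_comp; [apply: incl_continuous|apply: cf].
have [[l [cl pl l0]] _] := UL s e0 x (f \o @wedge_incl S Z z s) cfs fx0.
have hes : f None = p (l (z s)) by rewrite pl /= incl_z.
have [g [cg pg g0]] := ex _ hes.
exists g; split => //.
have fz : (f \o @wedge_incl S Z z s) (z s) = p (l (z s)) by rewrite pl.
have E12 := (UL s _ (z s) _ cfs fz).2 (g \o @wedge_incl S Z z s) l.
have cg' : continuous (g \o @wedge_incl S Z z s).
  by move=> u; apply: continuous_comp; [apply: incl_continuous|apply: cg].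
have pg' : forall u, p ((g \o @wedge_incl S Z z s) u) = (f \o @wedge_incl S Z z s) u.
  by move=> u; rewrite /= pg.
have g0' : (g \o @wedge_incl S Z z s) (z s) = l (z s) by rewrite /= incl_z.
have HE := E12 cg' cl pg' pl g0' erefl.
rewrite -l0; exact: (congr1 (fun F => F x) HE).
Qed.
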